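(* Let $\mathcal{H}$ and $\mathcal{K}$ be finite-dimensional complex Hilbert spaces, and let $\mathcal{HP}$ be the set of all Hermitian-preserving trace-preserving linear maps $B(\mathcal{H})\to B(\mathcal{K})$, with the topology induced by any norm. Let $\mathcal{SP}\subseteq\mathcal{HP}$ and $\mathcal{SN}\subseteq\mathcal{HP}$ be the subsets of SP maps and SN maps respectively. Then, with interior and closure taken in $\mathcal{HP}$, $$\operatorname{int}(\mathcal{SN})=\mathcal{SP}\quad\text{and}\quad \overline{\mathcal{SP}}=\mathcal{SN}.$$
   Context: $B(\mathcal{H})$ denotes all linear operators on $\mathcal{H}$; a density matrix is a positive semidefinite operator of trace one. A map is Hermitian-preserving if $\Psi(X^\dagger)=\Psi(X)^\dagger$ and trace-preserving if $\operatorname{Tr}\Psi(X)=\operatorname{Tr}X$. An HPTP map $\Psi$ is SP (semi-positive) if there is an invertible density matrix $\rho\in B(\mathcal{H})$ such that $\Psi(\rho)$ is an invertible density matrix; it is SN (semi-nonnegative) if there is a density matrix $\rho$ such that $\Psi(\rho)$ is a density matrix. *)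

(* Defs.v *)
From HB Require Import structures.
From mathcomp Require Import all_boot all_order all_algebra.
From mathcomp Require Import reals.
From mathcomp Require Import complex.
Set Implicit Arguments. Unset Strict Implicit. Unset Printing Implicit Defensive.
Import Order.TTheory GRing.Theory Num.Theory.
Local Open Scope ring_scope.

Section Defs.
Variable R : realType.
Local Notation C := (R[i]).

Definition adj {p q : nat} (A : 'M[C]_(p, q)) : 'M[C]_(q, p) :=
  (map_mx Num.conj A)^T.

Definition psd {p : nat} (A : 'M[C]_p) : Prop :=
  adj A = A /\ forall v : 'cV[C]_p, 0 <= (adj v *m A *m v) 0 0.

Definition density {p : nat} (A : 'M[C]_p) : Prop := psd A /\ \tr A = 1.

Definition hermitian_preserving {n m : nat} (Psi : {linear 'M[C]_n -> 'M[C]_m}) :=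
  forall X : 'M[C]_n, Psi (adj X) = adj (Psi X).

Definition trace_preserving {n m : nat} (Psi : {linear 'M[C]_n -> 'M[C]_m}) :=
  forall X : 'M[C]_n, \tr (Psi X) = \tr X.

Definition HP {n m : nat} (Psi : {linear 'M[C]_n -> 'M[C]_m}) : Prop :=
  hermitian_preserving Psi /\ trace_preserving Psi.

Definition SP {n m : nat} (Psi : {linear 'M[C]_n -> 'M[C]_m}) : Prop :=
  HP Psi /\ exists rho : 'M[C]_n,
    [/\ density rho, rho \in unitmx, density (Psi rho) & Psi rho \in unitmx].

Definition SN {n m : nat} (Psi : {linear 'M[C]_n -> 'M[C]_m}) : Prop :=
  HP Psi /\ exists rho : 'M[C]_n, density rho /\ density (Psi rho).

(* The (open) ball of radius eps around Psi for the sup-norm of the coefficients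
   of the maps in the matrix-unit basis: this norm induces the (unique) norm
   topology on the finite-dimensional space of linear maps. *)
Definition near_map {n m : nat} (eps : R) (Psi Phi : {linear 'M[C]_n -> 'M[C]_m}) :=
  forall (i j : 'I_n) (k l : 'I_m),
    `|Phi (delta_mx i j) k l - Psi (delta_mx i j) k l| < (eps%:C)%C.

Definition interior_HP {n m : nat} (S : {linear 'M[C]_n -> 'M[C]_m} -> Prop)
  (Psi : {linear 'M[C]_n -> 'M[C]_m}) : Prop :=
  HP Psi /\ S Psi /\ exists eps : R, 0 < eps /\
    forall Phi, HP Phi -> near_map eps Psi Phi -> S Phi.

Definition closure_HP {n m : nat} (S : {linear 'M[C]_n -> 'M[C]_m} -> Prop)
  (Psi : {linear 'M[C]_n -> 'M[C]_m}) : Prop :=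
  HP Psi /\ forall eps : R, 0 < eps ->
    exists Phi, S Phi /\ HP Phi /\ near_map eps Psi Phi.

End Defs.

(* Main.v *)
From Pilot Require Import Defs.
From HB Require Import structures.
From mathcomp Require Import all_boot all_order all_algebra.
From mathcomp Require Import reals complex.
From mathcomp Require Import all_classical topology normedtype sequences.
From mathcomp Require Import ring lra.
Import Order.TTheory GRing.Theory Num.Theory numFieldNormedType.Exports.
Local Open Scope ring_scope.
Import Pilot.Defs.
Set Implicit Arguments. Unset Strict Implicit. Unset Printing Implicit Defensive.

Section Basics.
Variable R : realType.
Local Notation C := (R[i]).
Local Notation rc := (real_complex R).

Definition nc (x : C) : R := complex.Re `|x|.

Lemma ncE (x : C) : `|x| = rc (nc x).
Proof. by rewrite /nc RRe_real // normr_real. Qed.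

Lemma nc_ge0 x : 0 <= nc x.
Proof. by rewrite -lecR rmorph0 -ncE normr_ge0. Qed.

Lemma ncD x y : nc (x + y) <= nc x + nc y.
Proof. by rewrite -lecR rmorphD -!ncE ler_normD. Qed.

Lemma ncM x y : nc (x * y) = nc x * nc y.
Proof. by apply: complexI; rewrite rmorphM -!ncE normrM. Qed.

Lemma ncN x : nc (- x) = nc x.
Proof. by rewrite /nc normrN. Qed.

Lemma ncB x y : nc (x - y) = nc (y - x).
Proof. by rewrite /nc distrC. Qed.

Lemma nc0 : nc 0 = 0.
Proof. by rewrite /nc normr0. Qed.

Lemma nc_eq0 x : nc x = 0 -> x = 0.
Proof. by move=> h; apply/normr0_eq0; rewrite ncE h rmorph0. Qed.

Lemma ncJ x : nc (x^*) = nc x.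
Proof. by rewrite /nc normcJ. Qed.

Lemma nc_def (x : C) : nc x = Num.sqrt (complex.Re x ^+ 2 + complex.Im x ^+ 2).
Proof. by rewrite /nc normc_def. Qed.

Lemma Re_le_nc x : `|complex.Re x| <= nc x.
Proof.
rewrite nc_def -sqrtr_sqr ler_wsqrtr // lerDl sqr_ge0 //.
Qed.

Lemma Im_le_nc x : `|complex.Im x| <= nc x.
Proof.
rewrite nc_def -sqrtr_sqr ler_wsqrtr // lerDr sqr_ge0 //.
Qed.

Lemma nc_le_ReIm x : nc x <= `|complex.Re x| + `|complex.Im x|.
Proof.
rewrite nc_def -[X in _ <= X]ger0_norm ?addr_ge0 // -sqrtr_sqr ler_wsqrtr //.
set a := complex.Re x; set b := complex.Im x.
rewrite sqrrD !real_normK ?num_real //.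
have h1 := normr_ge0 a; have h2 := normr_ge0 b.
have : 0 <= `|a| * `|b| by apply: mulr_ge0.
lra.
Qed.

Lemma nc_rc (a : R) : nc (rc a) = `|a|.
Proof. by rewrite nc_def /= expr0n /= addr0 sqrtr_sqr. Qed.

End Basics.

Section Conv.
Variable R : realType.
Local Notation C := (R[i]).
Local Notation rc := (real_complex R).

Definition conv (u : nat -> C) (a : C) :=
  forall e : R, 0 < e -> exists N, forall k, (N <= k)%N -> nc (u k - a) < e.
Definition rconv (u : nat -> R) (a : R) :=
  forall e : R, 0 < e -> exists N, forall k, (N <= k)%N -> `|u k - a| < e.

Lemma small0 (x : R) : 0 <= x -> (forall e, 0 < e -> x < e) -> x = 0.
Proof.
move=> x0 h; apply/eqP; rewrite eq_le x0 andbT leNgt; apply/negP => hx.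
by have := h x hx; rewrite ltxx.
Qed.

Lemma conv_ext u v a : (forall k, u k = v k) -> conv u a -> conv v a.
Proof. by move=> h cu e /cu [N HN]; exists N => k /HN; rewrite h. Qed.

Lemma conv_cst a : conv (fun _ => a) a.
Proof. by move=> e e0; exists 0%N => k _; rewrite subrr nc0. Qed.

Lemma conv_add u v a b : conv u a -> conv v b -> conv (fun k => u k + v k) (a + b).
Proof.
move=> cu cv e e0. have e2 : 0 < e / 2 by rewrite divr_gt0.
have [N1 H1] := cu _ e2; have [N2 H2] := cv _ e2.
exists (maxn N1 N2) => k hk.
have h1 := H1 k (leq_trans (leq_maxl _ _) hk).
have h2 := H2 k (leq_trans (leq_maxr _ _) hk).
have -> : u k + v k - (a + b) = (u k - a) + (v k - b) by rewrite opprD addrACA.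
apply: le_lt_trans (ncD _ _) _. lra.
Qed.

Lemma conv_opp u a : conv u a -> conv (fun k => - u k) (- a).
Proof. by move=> cu e /cu [N HN]; exists N => k /HN; rewrite -opprD ncN. Qed.

Lemma conv_sub u v a b : conv u a -> conv v b -> conv (fun k => u k - v k) (a - b).
Proof. by move=> cu cv; apply: conv_add cu (conv_opp cv). Qed.

Lemma conv_conj u a : conv u a -> conv (fun k => (u k)^*) (a^*).
Proof. by move=> cu e /cu [N HN]; exists N => k /HN; rewrite -rmorphB ncJ. Qed.

Lemma conv_mul u v a b : conv u a -> conv v b -> conv (fun k => u k * v k) (a * b).
Proof.
move=> cu cv e e0.
set K := nc a + nc b + 1.
have K0 : 0 < K by have := nc_ge0 a; have := nc_ge0 b; rewrite /K; lra.
have d0 : 0 < e / K by rewrite divr_gt0.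
have [N1 H1] := cu _ ltr01; have [N2 H2] := cu _ d0; have [N3 H3] := cv _ d0.
exists (maxn N1 (maxn N2 N3)) => k hk.
have h1 := H1 k (leq_trans (leq_maxl _ _) hk).
have h2 := H2 k (leq_trans (leq_maxl _ _) (leq_trans (leq_maxr _ _) hk)).
have h3 := H3 k (leq_trans (leq_maxr _ _) (leq_trans (leq_maxr _ _) hk)).
have -> : u k * v k - a * b = u k * (v k - b) + (u k - a) * b.
  by rewrite mulrBr mulrBl addrA subrK.
apply: le_lt_trans (ncD _ _) _; rewrite !ncM.
have hu : nc (u k) <= nc a + 1.
  have -> : u k = (u k - a) + a by rewrite subrK.
  by apply: le_trans (ncD _ _) _; lra.
have ge1 := nc_ge0 (u k); have ge2 := nc_ge0 (v k - b); have ge3 := nc_ge0 b.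
have ge4 := nc_ge0 (u k - a); have ge5 := nc_ge0 a.
have eK : e / K * K = e by rewrite divfK // gt_eqF.
set d := e / K in d0 h2 h3 eK.
rewrite -eK /K.
set X := nc (u k) in ge1 hu *; set Y := nc (v k - b) in ge2 h3 *.
set Z := nc (u k - a) in ge4 h2 *; set W := nc b in ge3 *; set A := nc a in ge5 hu *.
nra.
Qed.

Lemma conv_sum (I : Type) (s : seq I) (P : pred I) (u : I -> nat -> C) (a : I -> C) :
  (forall i, conv (u i) (a i)) ->
  conv (fun k => \sum_(i <- s | P i) u i k) (\sum_(i <- s | P i) a i).
Proof.
move=> h; elim: s => [|x s IH].
  by apply: conv_ext (conv_cst _) => k; rewrite !big_nil.
rewrite big_cons; case Px: (P x).
  by apply: conv_ext (conv_add (h x) IH) => k; rewrite big_cons Px.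
by apply: conv_ext IH => k; rewrite big_cons Px.
Qed.

Lemma conv_sub_seq u a (g : nat -> nat) :
  (forall k, (k <= g k)%N) -> conv u a -> conv (fun k => u (g k)) a.
Proof.
move=> hg cu e /cu [N HN]; exists N => k hk; apply: HN.
exact: leq_trans hk (hg k).
Qed.

Lemma conv_uniq u a b : conv u a -> conv u b -> a = b.
Proof.
move=> ca cb; apply/eqP; rewrite -subr_eq0; apply/eqP; apply: nc_eq0.
apply: (small0 (nc_ge0 (a - b))) => e e0.
have e2 : 0 < e / 2 by rewrite divr_gt0.
have [N1 H1] := ca _ e2; have [N2 H2] := cb _ e2.
have h1 := H1 (maxn N1 N2) (leq_maxl _ _).
have h2 := H2 (maxn N1 N2) (leq_maxr _ _).
set w := u (maxn N1 N2) in h1 h2.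
have -> : a - b = (w - b) - (w - a) by ring.
apply: le_lt_trans (ncD _ _) _; rewrite ncN; lra.
Qed.

Lemma ReB (x y : C) : complex.Re (x - y) = complex.Re x - complex.Re y.
Proof. by case: x; case: y. Qed.
Lemma ImB (x y : C) : complex.Im (x - y) = complex.Im x - complex.Im y.
Proof. by case: x; case: y. Qed.

Lemma conv_Re u a : conv u a -> rconv (fun k => complex.Re (u k)) (complex.Re a).
Proof.
move=> cu e /cu [N HN]; exists N => k /HN h.
by rewrite -ReB; apply: le_lt_trans (Re_le_nc _) h.
Qed.

Lemma conv_Im u a : conv u a -> rconv (fun k => complex.Im (u k)) (complex.Im a).
Proof.
move=> cu e /cu [N HN]; exists N => k /HN h.
by rewrite -ImB; apply: le_lt_trans (Im_le_nc _) h.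
Qed.

Lemma rconv_le u a b : rconv u a -> (forall k, u k <= b) -> a <= b.
Proof.
move=> cu hb; rewrite leNgt; apply/negP => ab.
have e0 : 0 < a - b by rewrite subr_gt0.
have [N HN] := cu (a - b) e0.
have := HN N (leqnn N); have := hb N; rewrite ltr_norml; lra.
Qed.

Lemma rconv_ge u a b : rconv u a -> (forall k, b <= u k) -> b <= a.
Proof.
move=> cu hb; rewrite leNgt; apply/negP => ab.
have e0 : 0 < b - a by rewrite subr_gt0.
have [N HN] := cu (b - a) e0.
have := HN N (leqnn N); have := hb N; rewrite ltr_norml; lra.
Qed.

Lemma conv_ge0 u a : conv u a -> (forall k, 0 <= u k) -> 0 <= a.
Proof.
move=> cu h; rewrite lecE /=.
have hR k : 0 <= complex.Re (u k) by have := h k; rewrite lecE => /andP[].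
have hI k : complex.Im (u k) = 0 by have := h k; rewrite lecE => /andP[/eqP ->].
have i1 : complex.Im a <= 0 by apply: rconv_le (conv_Im cu) _ => k; rewrite hI.
have i2 : 0 <= complex.Im a by apply: rconv_ge (conv_Im cu) _ => k; rewrite hI.
have -> : complex.Im a = 0 by apply/eqP; rewrite eq_le i1 i2.
by rewrite eqxx /=; apply: rconv_ge (conv_Re cu) _.
Qed.

Lemma conv_0 u (c : R) : 0 <= c -> (forall k, nc (u k) <= c / (k.+1)%:R) -> conv u 0.
Proof.
move=> c0 h e e0.
have hb := archi_boundP (divr_ge0 c0 (ltW e0)).
set N := Num.Def.archi_bound (c / e) in hb.
exists N => k hk; rewrite subr0.
apply: le_lt_trans (h k) _.
have hk' : (N%:R : R) <= k.+1%:R by rewrite ler_nat; exact: leqW hk.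
have : c / e < k.+1%:R by apply: lt_le_trans hb hk'.
rewrite ltr_pdivrMr // ltr_pdivrMr ?ltr0Sn // mulrC //.
Qed.

Lemma nc_dist (x y : C) : `|nc x - nc y| <= nc (x - y).
Proof.
have h1 : nc x <= nc (x - y) + nc y by have := ncD (x - y) y; rewrite subrK.
have h2 : nc y <= nc (y - x) + nc x by have := ncD (y - x) x; rewrite subrK.
rewrite (ncB y x) in h2; rewrite ler_norml; lra.
Qed.

Lemma conv_nc u a : conv u a -> conv (fun k => rc (nc (u k))) (rc (nc a)).
Proof.
move=> cu e /cu [N HN]; exists N => k /HN h.
by rewrite -rmorphB nc_rc; apply: le_lt_trans (nc_dist _ _) h.
Qed.

Definition mconv p q (M : nat -> 'M[C]_(p, q)) (L : 'M[C]_(p, q)) :=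
  forall i j, conv (fun k => M k i j) (L i j).

End Conv.

Section Extract.
Variable R : realType.

Lemma rconv_sub_seq (u : nat -> R) a (g : nat -> nat) :
  (forall k, (k <= g k)%N) -> rconv u a -> rconv (fun k => u (g k)) a.
Proof.
move=> hg cu e /cu [N HN]; exists N => k hk; apply: HN.
exact: leq_trans hk (hg k).
Qed.

Lemma incr_ge (g : nat -> nat) : (forall k, (g k < g k.+1)%N) -> forall k, (k <= g k)%N.
Proof.
move=> h; elim=> [|k IH] //; exact: leq_ltn_trans IH (h k).
Qed.

Lemma cvgn_rconv (v : nat -> R) : cvgn v -> exists l, rconv v l.
Proof.
move=> /cvg_ex [l hl]; exists l => e e0.
have := (cvgrPdist_lt _ _).1 hl e e0.
move=> [N _ HN]; exists N => k hk; rewrite distrC; exact: HN.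
Qed.

Lemma rextract (I : finType) (u : I -> nat -> R) (B : R) :
  (forall i k, `|u i k| <= B) ->
  exists g : nat -> nat, (forall k, (g k < g k.+1)%N) /\
     forall i, exists l, rconv (fun k => u i (g k)) l.
Proof.
move=> hB.
suff H : forall s : seq I, exists g : nat -> nat, (forall k, (g k < g k.+1)%N) /\
     forall i, i \in s -> exists l, rconv (fun k => u i (g k)) l.
  have [g [gi gc]] := H (enum I).
  by exists g; split => // i; apply: gc; rewrite mem_enum.
elim=> [|x s [g [gi gc]]].
  by exists id; split => // i.
have bnd : bounded_fun (fun k => u x (g k)).
  exists B; split; first exact: num_real.
  by move=> M hM k _ /=; apply: le_trans (hB _ _) (ltW hM).
have [f fi fc] := bolzano_weierstrass bnd.
have fs k : (f k < f k.+1)%N.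
  have e := fi k.+1 k.
  change ((f k.+1 <= f k)%N = (k.+1 <= k)%N) in e.
  by rewrite ltnNge e ltnn.
exists (fun k => g (f k)); split.
  have hg := homo_ltn (r := fun a b => (a < b)%N) (fun y x z => @ltn_trans y x z) gi.
  by move=> k; apply: hg; apply: fs.
move=> i; rewrite in_cons => /orP[/eqP ->|hi].
  exact: cvgn_rconv fc.
have [l hl] := gc i hi; exists l.
exact: rconv_sub_seq (incr_ge fs) hl.
Qed.

End Extract.


Section MExtract.
Variable R : realType.
Local Notation C := (R[i]).

Lemma mextract p q (M : nat -> 'M[C]_(p, q)) (B : R) :
  (forall k i j, nc (M k i j) <= B) ->
  exists g : nat -> nat, (forall k, (k <= g k)%N) /\
    exists L, mconv (fun k => M (g k)) L.
Proof.
move=> hB.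
pose u (x : ('I_p * 'I_q * bool)%type) k :=
  let: (i, j, b) := x in if b then complex.Re (M k i j) else complex.Im (M k i j).
have hu : forall x k, `|u x k| <= B.
  move=> [[i j] [|]] k /=.
    exact: le_trans (Re_le_nc _) (hB _ _ _).
  exact: le_trans (Im_le_nc _) (hB _ _ _).
have [g [gi gc]] := rextract hu.
have [l hl] := choice gc.
exists g; split; first exact: incr_ge.
exists (\matrix_(i, j) ((l (i, j, true)) +i* (l (i, j, false)))%C) => i j e e0.
have e2 : 0 < e / 2 by rewrite divr_gt0.
have [N1 H1] := hl (i, j, true) _ e2.
have [N2 H2] := hl (i, j, false) _ e2.
exists (maxn N1 N2) => k hk.
have h1 := H1 k (leq_trans (leq_maxl _ _) hk).
have h2 := H2 k (leq_trans (leq_maxr _ _) hk).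
rewrite /= in h1 h2.
apply: le_lt_trans (nc_le_ReIm _) _.
rewrite ReB ImB mxE /=; lra.
Qed.

End MExtract.


Section Alg.
Variable R : realType.
Local Notation C := (R[i]).
Local Notation rc := (real_complex R).

Lemma hadjE p q (A : 'M[C]_(p, q)) i j : adj A i j = (A j i)^*.
Proof. by rewrite /adj !mxE. Qed.

Lemma hadjK p q (A : 'M[C]_(p, q)) : adj (adj A) = A.
Proof. by apply/matrixP => i j; rewrite !hadjE conjCK. Qed.

Lemma hadjD p q (A B : 'M[C]_(p, q)) : adj (A + B) = adj A + adj B.
Proof. by apply/matrixP => i j; rewrite !mxE rmorphD. Qed.

Lemma hadjN p q (A : 'M[C]_(p, q)) : adj (- A) = - adj A.
Proof. by apply/matrixP => i j; rewrite !mxE rmorphN. Qed.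

Lemma hadjZ p q c (A : 'M[C]_(p, q)) : adj (c *: A) = c^* *: adj A.
Proof. by apply/matrixP => i j; rewrite !mxE rmorphM. Qed.

Lemma hadj0 p q : adj (0 : 'M[C]_(p, q)) = 0.
Proof. by apply/matrixP => i j; rewrite !mxE rmorph0. Qed.

Lemma hadjM p q r (A : 'M[C]_(p, q)) (B : 'M[C]_(q, r)) : adj (A *m B) = adj B *m adj A.
Proof.
apply/matrixP => i j; rewrite !mxE rmorph_sum; apply: eq_bigr => k _.
by rewrite !mxE rmorphM mulrC.
Qed.

Lemma hadj1 n : adj (1%:M : 'M[C]_n) = 1%:M.
Proof.
by apply/matrixP => i j; rewrite !mxE eq_sym conjC_nat.
Qed.

Lemma hadj_tr n (A : 'M[C]_n) : \tr (adj A) = (\tr A)^*.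
Proof. by rewrite /mxtrace rmorph_sum; apply: eq_bigr => i _; rewrite !mxE. Qed.

Lemma conj_rc (a : R) : (rc a)^* = rc a.
Proof. exact: conjc_real. Qed.

Definition bf n (A : 'M[C]_n) (x y : 'cV[C]_n) := (adj x *m A *m y) 0 0.

Lemma bf_expand n (A : 'M[C]_n) x y :
  bf A x y = \sum_i \sum_j (x i 0)^* * A i j * y j 0.
Proof.
rewrite /bf mxE exchange_big /=; apply: eq_bigr => j _.
rewrite mxE mulr_suml; apply: eq_bigr => i _.
by rewrite hadjE.
Qed.

Lemma bfDl n (A : 'M[C]_n) x y z : bf A (x + y) z = bf A x z + bf A y z.
Proof. by rewrite /bf hadjD !mulmxDl mxE. Qed.

Lemma bfDr n (A : 'M[C]_n) x y z : bf A x (y + z) = bf A x y + bf A x z.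
Proof. by rewrite /bf mulmxDr mxE. Qed.

Lemma bfZl n (A : 'M[C]_n) c x y : bf A (c *: x) y = c^* * bf A x y.
Proof. by rewrite /bf hadjZ -!scalemxAl mxE. Qed.

Lemma bfZr n (A : 'M[C]_n) c x y : bf A x (c *: y) = c * bf A x y.
Proof. by rewrite /bf -scalemxAr mxE. Qed.

Lemma bfAD n (A B : 'M[C]_n) x y : bf (A + B) x y = bf A x y + bf B x y.
Proof. by rewrite /bf mulmxDr mulmxDl mxE. Qed.

Lemma bfAZ n (A : 'M[C]_n) c x y : bf (c *: A) x y = c * bf A x y.
Proof. by rewrite /bf -scalemxAr -scalemxAl mxE. Qed.

Lemma bf_adj n (A : 'M[C]_n) x y : adj A = A -> bf A y x = (bf A x y)^*.
Proof.
move=> hA; rewrite /bf -hadjE !hadjM hadjK hA; by rewrite mulmxA.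
Qed.

Lemma bf1 n (x : 'cV[C]_n) : bf 1%:M x x = \sum_i (x i 0)^* * x i 0.
Proof.
rewrite bf_expand; apply: eq_bigr => i _.
rewrite (bigD1 i) //= big1 ?addr0 => [|j ji]; first by rewrite mxE eqxx mulr1.
by rewrite mxE eq_sym (negPf ji) mulr0 mul0r.
Qed.

Lemma bf1_ge0 n (x : 'cV[C]_n) : 0 <= bf 1%:M x x.
Proof. by rewrite bf1 sumr_ge0 // => i _; rewrite mulrC mul_conjC_ge0. Qed.

Lemma psd_add n (A B : 'M[C]_n) : psd A -> psd B -> psd (A + B).
Proof.
move=> [hA pA] [hB pB]; split; first by rewrite hadjD hA hB.
move=> v; have := pA v; have := pB v; rewrite -!/(bf _ v v) bfAD.
by move=> h1 h2; apply: addr_ge0.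
Qed.

Lemma psd_scale n (A : 'M[C]_n) (c : R) : 0 <= c -> psd A -> psd (rc c *: A).
Proof.
move=> c0 [hA pA]; split; first by rewrite hadjZ hA conj_rc.
move=> v; have := pA v; rewrite -!/(bf _ v v) bfAZ => h.
by apply: mulr_ge0 => //; rewrite lecR.
Qed.

Lemma psd1 n : psd (1%:M : 'M[C]_n).
Proof. by split; [exact: hadj1 | move=> v; exact: bf1_ge0]. Qed.

Lemma psd_pd n (P : 'M[C]_n) (s : R) : psd P -> 0 < s ->
  (P + rc s *: 1%:M) \in unitmx.
Proof.
move=> hP s0.
have [hM pM] : psd (P + rc s *: 1%:M) by apply: psd_add => //; apply: psd_scale (ltW s0) (psd1 _).
rewrite -row_free_unit; apply: inj_row_free => v hv.
set M := P + rc s *: 1%:M in hM pM hv *.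
set w := adj v.
have Mw : M *m w = 0 by rewrite /w -hM -hadjM hv hadj0.
have : bf M w w = 0 by rewrite /bf -mulmxA Mw mulmx0 mxE.
rewrite bfAD bfAZ => /eqP; rewrite paddr_eq0; last first.
- by apply: mulr_ge0; [rewrite lecR ltW | exact: bf1_ge0].
- by case: hP => _; apply.
move=> /andP[_]; rewrite mulf_eq0 => /orP[|].
  by rewrite (inj_eq (@complexI R)) gt_eqF.
rewrite bf1 => /eqP hs.
have w0 : w = 0.
  apply/matrixP => i j; rewrite (ord1 j) [RHS]mxE.
  have := psumr_eq0P (P := xpredT) (F := fun i => (w i 0)^* * w i 0) _ hs (i := i) isT.
  move=> /(_ _) h; apply/eqP; rewrite -mul_conjC_eq0 mulrC h //.
  by move=> k _; rewrite mulrC mul_conjC_ge0.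
by rewrite -[v]hadjK -/w w0 hadj0.
Qed.

End Alg.


Section Dens.
Variable R : realType.
Local Notation C := (R[i]).
Local Notation rc := (real_complex R).

Definition dshift d (s : R) (P : 'M[C]_d.+1) :=
  rc ((1 + s)^-1) *: (P + rc (s / d.+1%:R) *: 1%:M).

Lemma dshift_density d s (P : 'M[C]_d.+1) : 0 < s -> density P ->
  density (dshift s P) /\ dshift s P \in unitmx.
Proof.
move=> s0 [hP trP].
have i0 : 0 < (1 + s)^-1 by rewrite invr_gt0; lra.
have t0 : 0 < s / d.+1%:R by rewrite divr_gt0 // ltr0Sn.
split; last first.
  rewrite /dshift unitmxZ; first exact: psd_pd.
  by rewrite unitfE (inj_eq (@complexI R)) gt_eqF.
split.
  by apply: psd_scale (ltW i0) _; apply: psd_add hP (psd_scale (ltW t0) (psd1 R _)).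
rewrite /dshift mxtraceZ mxtraceD mxtraceZ mxtrace1 trP.
have key : (1 + s)^-1 * (1 + s / d.+1%:R * d.+1%:R) = 1 :> R.
  rewrite divfK ?pnatr_eq0 // mulVf // gt_eqF //; lra.
rewrite -(rmorph_nat (real_complex R) d.+1) -rmorphM -(rmorph1 (real_complex R)).
by rewrite -rmorphD -rmorphM key.
Qed.

Lemma hadj_delta p q i j : adj (delta_mx i j : 'M[C]_(p, q)) = delta_mx j i.
Proof. by apply/matrixP => a b; rewrite !mxE conjC_nat andbC. Qed.

Lemma bf_delta n (A : 'M[C]_n) i j : bf A (delta_mx i 0) (delta_mx j 0) = A i j.
Proof. by rewrite /bf hadj_delta -rowE -colE !mxE. Qed.

Lemma ReD (x y : C) : complex.Re (x + y) = complex.Re x + complex.Re y.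
Proof. by case: x; case: y. Qed.
Lemma ReJ (x : C) : complex.Re (x^*) = complex.Re x.
Proof. by case: x. Qed.
Lemma ge0_Re (x : C) : 0 <= x -> 0 <= complex.Re x.
Proof. by rewrite lecE => /andP[]. Qed.

Lemma dens_diag n (A : 'M[C]_n) i : density A -> 0 <= A i i /\ A i i <= 1.
Proof.
move=> [[hA pA] trA].
have d0 k : 0 <= A k k by have := pA (delta_mx k 0); rewrite -/(bf _ _ _) bf_delta.
split => //; rewrite -trA /mxtrace (bigD1 i) //= lerDl.
by apply: sumr_ge0 => k _; apply: d0.
Qed.

Lemma offdiag n (A : 'M[C]_n) i j (c : C) : psd A -> i != j -> c^* * c = 1 ->
  0 <= complex.Re (A i i) + complex.Re (A j j) + 2 * complex.Re (A i j * c).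
Proof.
move=> [hA pA] ij cc.
have := pA (delta_mx i 0 + c *: delta_mx j 0); rewrite -/(bf _ _ _).
rewrite !(bfDl, bfDr, bfZl, bfZr) !bf_delta mulrDr mulrA cc mul1r.
have -> : A j i = (A i j)^* by rewrite -[in LHS]hA !mxE.
move=> /ge0_Re; rewrite !ReD -rmorphM ReJ [c * _]mulrC.
set x := complex.Re (A i j * c); lra.
Qed.

Lemma Re_mul_i (x : C) : complex.Re (x * 'i%C) = - complex.Im x.
Proof. by case: x => a b /=; ring. Qed.
Lemma Re_mul_Ni (x : C) : complex.Re (x * - 'i%C) = complex.Im x.
Proof. by case: x => a b /=; ring. Qed.
Lemma Re_mul_N1 (x : C) : complex.Re (x * -1) = - complex.Re x.
Proof. by case: x => a b /=; ring. Qed.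

Lemma dens_bound n (A : 'M[C]_n) i j : density A -> nc (A i j) <= 2.
Proof.
move=> hd; have [[hA pA] _] := hd.
have [di1 di2] := dens_diag i hd; have [dj1 dj2] := dens_diag j hd.
have ri1 := ge0_Re di1; have rj1 := ge0_Re dj1.
have ri2 : complex.Re (A i i) <= 1 by move: di2; rewrite lecE => /andP[].
have rj2 : complex.Re (A j j) <= 1 by move: dj2; rewrite lecE => /andP[].
apply: le_trans (nc_le_ReIm _) _.
have [->|ij] := eqVneq i j.
  have -> : complex.Im (A j j) = 0 by move: dj1; rewrite lecE => /andP[/eqP ->].
  by rewrite normr0 addr0 ger0_norm //; lra.
have c1 : (1 : C)^* * 1 = 1 by rewrite rmorph1 mulr1.
have c2 : (-1 : C)^* * -1 = 1 by rewrite rmorphN rmorph1 mulrNN mulr1.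
have c3 : ('i%C : C)^* * 'i%C = 1 by simpc.
have c4 : (- 'i%C : C)^* * - 'i%C = 1 by simpc.
have h1 := offdiag hd.1 ij c1.
have h2 := offdiag hd.1 ij c2.
have h3 := offdiag hd.1 ij c3.
have h4 := offdiag hd.1 ij c4.
rewrite mulr1 in h1; rewrite Re_mul_N1 in h2; rewrite Re_mul_i in h3.
rewrite Re_mul_Ni in h4.
have : `|complex.Re (A i j)| <= 1 by rewrite ler_norml; lra.
have : `|complex.Im (A i j)| <= 1 by rewrite ler_norml; lra.
lra.
Qed.

End Dens.


Section Lin.
Variable R : realType.
Local Notation C := (R[i]).
Local Notation rc := (real_complex R).
Variables n m : nat.

Definition pert_fun (Psi : {linear 'M[C]_n -> 'M[C]_m}) (c : R) (D : 'M[C]_m)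
  (X : 'M[C]_n) : 'M[C]_m := Psi X + (rc c * \tr X) *: D.

Fact pert_is_linear Psi c D : linear (pert_fun Psi c D).
Proof.
move=> a x y; rewrite /pert_fun linearP mxtraceD mxtraceZ.
rewrite mulrDr scalerDl mulrCA -scalerA scalerDr.
by rewrite [a *: (_ *: D)]scalerA addrACA.
Qed.

Definition pert Psi c D : {linear 'M[C]_n -> 'M[C]_m} :=
  HB.pack (pert_fun Psi c D) (GRing.isLinear.Build _ _ _ _ (pert_fun Psi c D) (pert_is_linear Psi c D)).

Lemma pertE Psi c D X : pert Psi c D X = Psi X + (rc c * \tr X) *: D.
Proof. by []. Qed.


Lemma pert_HP Psi c D : HP Psi -> adj D = D -> \tr D = 0 -> HP (pert Psi c D).
Proof.
move=> [hP tP] hD tD; split.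
  move=> X; rewrite !pertE hP hadjD hadjZ hD hadj_tr rmorphM /= conj_rc //.
move=> X; rewrite pertE mxtraceD mxtraceZ tD mulr0 addr0; exact: tP.
Qed.

Lemma tr_delta (a b : 'I_n) : \tr (delta_mx a b : 'M[C]_n) = (a == b)%:R.
Proof.
rewrite /mxtrace (bigD1 a) //= mxE eqxx /= big1 ?addr0 // => i ia.
by rewrite mxE (negPf ia).
Qed.

Lemma pert_delta Psi c D (a b : 'I_n) :
  pert Psi c D (delta_mx a b) - Psi (delta_mx a b) = (rc c * (a == b)%:R) *: D.
Proof. by rewrite pertE tr_delta addrAC subrr add0r. Qed.

Lemma ncE_lt (x : C) (e : R) : (`|x| < rc e) = (nc x < e).
Proof. by rewrite ncE ltcR. Qed.

Lemma nc1 : nc (1 : C) = 1.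
Proof. by rewrite -(rmorph1 rc) nc_rc normr1. Qed.

Lemma pert_near (Psi : {linear 'M[C]_n -> 'M[C]_m}) c (D : 'M[C]_m) (eps : R) :
  0 < eps -> (forall k l, `|c| * nc (D k l) < eps) -> near_map eps Psi (pert Psi c D).
Proof.
move=> e0 h a b k l; rewrite ncE_lt.
have := congr1 (fun M : 'M[C]_m => M k l) (pert_delta Psi c D a b); rewrite !mxE => ->.
rewrite !ncM nc_rc; case: (a == b); first by rewrite nc1 mulr1.
by rewrite nc0 mulr0 mul0r.
Qed.


Lemma lin_entry (Psi : {linear 'M[C]_n -> 'M[C]_m}) X i j :
  Psi X i j = \sum_a \sum_b X a b * Psi (delta_mx a b) i j.
Proof.
rewrite {1}(matrix_sum_delta X) linear_sum summxE; apply: eq_bigr => a _.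
rewrite linear_sum summxE; apply: eq_bigr => b _.
by rewrite linearZ mxE.
Qed.

Lemma nc_sum (I : Type) (s : seq I) (P : pred I) (F : I -> C) :
  nc (\sum_(i <- s | P i) F i) <= \sum_(i <- s | P i) nc (F i).
Proof.
rewrite -lecR rmorph_sum -ncE.
rewrite [X in _ <= X](eq_bigr (fun i => `|F i|)) => [|i _]; last by rewrite ncE.
exact: ler_norm_sum.
Qed.

Lemma near_bound (Psi Phi : {linear 'M[C]_n -> 'M[C]_m}) eps X i j :
  Defs.near_map eps Psi Phi ->
  nc (Phi X i j - Psi X i j) <= eps * \sum_a \sum_b nc (X a b).
Proof.
move=> h; rewrite !lin_entry -sumrB (le_trans (nc_sum _ _ _)) // mulr_sumr ler_sum // => a _.
rewrite -sumrB (le_trans (nc_sum _ _ _)) // mulr_sumr ler_sum // => b _.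
rewrite -mulrBr ncM [eps * _]mulrC ler_wpM2l ?nc_ge0 //.
by have := h a b i j; rewrite ncE_lt => /ltW.
Qed.

Definition Dm (Psi : {linear 'M[C]_n -> 'M[C]_m}) : 'M[C]_m :=
  rc (n%:R^-1) *: Psi 1%:M - rc (m%:R^-1) *: 1%:M.

Lemma Dm_adj Psi : HP Psi -> adj (Dm Psi) = Dm Psi.
Proof.
move=> [hP _]; rewrite /Dm hadjD hadjN !hadjZ -hP !hadj1.
by rewrite !conj_rc.
Qed.

Lemma Dm_tr Psi : HP Psi -> (0 < n)%N -> (0 < m)%N -> \tr (Dm Psi) = 0.
Proof.
move=> [_ tP] n0 m0; rewrite /Dm linearB /= !mxtraceZ tP !mxtrace1.
have hn : rc (n%:R^-1) * n%:R = 1.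
  by rewrite -(rmorph_nat rc n) -rmorphM mulVf ?rmorph1 // pnatr_eq0 -lt0n.
have hm : rc (m%:R^-1) * m%:R = 1.
  by rewrite -(rmorph_nat rc m) -rmorphM mulVf ?rmorph1 // pnatr_eq0 -lt0n.
by rewrite hn hm subrr.
Qed.

End Lin.

Section Ident.
Variable R : realType.
Local Notation C := (R[i]).
Local Notation rc := (real_complex R).
Variables d e : nat.

Lemma ident1 (Psi : {linear 'M[C]_d.+1 -> 'M[C]_e.+1}) (s : R) rho : \tr rho = 1 ->
  Psi (dshift s rho) = dshift s (pert Psi s (Dm Psi) rho).
Proof.
move=> tr1; rewrite /dshift linearZ linearD linearZ pertE tr1 mulr1 /Dm.
rewrite !rmorphM /=; apply/matrixP => i j; rewrite !mxE; ring.
Qed.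

Lemma ident4 (Psi : {linear 'M[C]_d.+1 -> 'M[C]_e.+1}) (s : R) rho :
  \tr (dshift s rho) = 1 ->
  pert Psi (- (s / (1 + s))) (Dm Psi) (dshift s rho) = dshift s (Psi rho).
Proof.
move=> tr1; rewrite pertE tr1 mulr1 /dshift linearZ linearD linearZ /Dm.
rewrite !rmorphM rmorphN rmorphM /=; apply/matrixP => i j; rewrite !mxE; ring.
Qed.
End Ident.


Section Easy.
Variable R : realType.
Local Notation C := (R[i]).
Local Notation rc := (real_complex R).

Lemma entry_le_sum p q (D : 'M[C]_(p, q)) k l :
  nc (D k l) <= \sum_k \sum_l nc (D k l).
Proof.
rewrite (bigD1 k) //= (bigD1 l) //= -addrA lerDl.
by apply: addr_ge0; apply: sumr_ge0 => *; [exact: nc_ge0 | apply: sumr_ge0 => *; exact: nc_ge0].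
Qed.

Lemma sum_nc_ge0 p q (D : 'M[C]_(p, q)) : 0 <= \sum_k \sum_l nc (D k l).
Proof. by apply: sumr_ge0 => *; apply: sumr_ge0 => *; exact: nc_ge0. Qed.

Variables d e : nat.

Lemma dir1 (Psi : {linear 'M[C]_d.+1 -> 'M[C]_e.+1}) :
  interior_HP (@SN R d.+1 e.+1) Psi -> SP Psi.
Proof.
move=> [hP [_ [eps [e0 hI]]]].
set D := Dm Psi; set S := \sum_k \sum_l nc (D k l).
have S0 : 0 <= S := sum_nc_ge0 D.
set s := eps / (S + 1).
have s0 : 0 < s by rewrite divr_gt0 //; lra.
have hsS : s * (S + 1) = eps by rewrite /s divfK // gt_eqF //; lra.
have hnear : Defs.near_map eps Psi (pert Psi s D).
  apply: pert_near => // k l; rewrite gtr0_norm //.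
  have := entry_le_sum D k l; rewrite -/S => h.
  have : 0 <= s * (S - nc (D k l)) by apply: mulr_ge0; lra.
  nra.
have hPhi : HP (pert Psi s D).
  by apply: pert_HP hP (Dm_adj hP) (Dm_tr hP _ _).
have [_ [rho [drho dPhi]]] := hI _ hPhi hnear.
split => //; exists (dshift s rho).
have [d1 u1] := dshift_density s0 drho.
have [d2 u2] := dshift_density s0 dPhi.
by rewrite ident1 //; case: drho.
Qed.

Lemma dir4 (Psi : {linear 'M[C]_d.+1 -> 'M[C]_e.+1}) :
  SN Psi -> closure_HP (@SP R d.+1 e.+1) Psi.
Proof.
move=> [hP [rho [drho dPsi]]]; split => // eps e0.
set D := Dm Psi; set S := \sum_k \sum_l nc (D k l).
have S0 : 0 <= S := sum_nc_ge0 D.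
set s := eps / (S + 1).
have s0 : 0 < s by rewrite divr_gt0 //; lra.
have hsS : s * (S + 1) = eps by rewrite /s divfK // gt_eqF //; lra.
set c := - (s / (1 + s)).
have hc : `|c| <= s.
  rewrite normrN ger0_norm ?divr_ge0 //; try lra.
  by rewrite ler_pdivrMr; nra.
have hnear : Defs.near_map eps Psi (pert Psi c D).
  apply: pert_near => // k l.
  have := entry_le_sum D k l; rewrite -/S => h.
  have := nc_ge0 (D k l); have := normr_ge0 c => h1 h2.
  have : 0 <= s * (S - nc (D k l)) by apply: mulr_ge0; lra.
  have : 0 <= (s - `|c|) * nc (D k l) by apply: mulr_ge0; lra.
  nra.
have hPhi : HP (pert Psi c D).
  by apply: pert_HP hP (Dm_adj hP) (Dm_tr hP _ _).
exists (pert Psi c D); split => //; split => //.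
have [d1 u1] := dshift_density s0 drho.
have [d2 u2] := dshift_density s0 dPsi.
exists (dshift s rho); rewrite ident4; [by split | by case: d1].
Qed.

End Easy.

Lemma no_density0 (R : realType) (A : 'M[R[i]]_0) : ~ density A.
Proof. by move=> [_]; rewrite /mxtrace big_ord0 => /eqP; rewrite eq_sym oner_eq0. Qed.


Section Seq.
Variable R : realType.
Local Notation C := (R[i]).
Local Notation rc := (real_complex R).

Lemma conv_lin n m (Psi : {linear 'M[C]_n -> 'M[C]_m}) X (L : 'M[C]_n) :
  mconv X L -> mconv (fun k => Psi (X k)) (Psi L).
Proof.
move=> hX i j; apply: conv_ext (fun k => esym (lin_entry Psi (X k) i j)) _.
rewrite lin_entry; apply: conv_sum => a; apply: conv_sum => b.
exact: conv_mul (hX a b) (conv_cst _).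
Qed.

Lemma conv_bf n (A : nat -> 'M[C]_n) (v : nat -> 'cV[C]_n) Al vl :
  mconv A Al -> mconv v vl ->
  conv (fun k => bf (A k) (v k) (v k)) (bf Al vl vl).
Proof.
move=> hA hv; apply: conv_ext (fun k => esym (bf_expand (A k) (v k) (v k))) _.
rewrite bf_expand; apply: conv_sum => i; apply: conv_sum => j.
apply: conv_mul (hv j 0); apply: conv_mul (hA i j).
exact: conv_conj (hv i 0).
Qed.

Lemma conv_near n m (Psi : {linear 'M[C]_n -> 'M[C]_m}) (Phi : nat -> {linear 'M[C]_n -> 'M[C]_m})
  (X : nat -> 'M[C]_n) (g : nat -> nat) (B : R) :
  0 <= B -> (forall k, Defs.near_map ((k.+1)%:R^-1) Psi (Phi k)) ->
  (forall k i j, nc (X k i j) <= B) -> (forall k, (k <= g k)%N) ->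
  forall i j, conv (fun k => Phi (g k) (X k) i j - Psi (X k) i j) 0.
Proof.
move=> B0 hn hB hg i j.
apply: (@conv_0 _ _ (\sum_(a < n) \sum_(b < n) B)).
  by apply: sumr_ge0 => *; apply: sumr_ge0.
move=> k /=; have h := near_bound (X k) i j (hn (g k)); eapply le_trans; [exact: h|].
have s1 : \sum_a \sum_b nc (X k a b) <= \sum_(a < n) \sum_(b < n) B.
  by apply: ler_sum => a _; apply: ler_sum => b _.
have s0 : 0 <= \sum_a \sum_b nc (X k a b).
  by apply: sumr_ge0 => *; apply: sumr_ge0 => *; exact: nc_ge0.
have i1 : (g k).+1%:R^-1 <= (k.+1%:R^-1 : R).
  by rewrite lef_pV2 ?posrE ?ltr0Sn // ler_nat ltnS.
have i0 : 0 <= (g k).+1%:R^-1 :> R by rewrite invr_ge0 ler0n.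
apply: le_trans (ler_wpM2l i0 s1) _; rewrite mulrC.
by apply: ler_wpM2l => //; apply: sumr_ge0 => *; apply: sumr_ge0.
Qed.

End Seq.


Section QF.
Variable R : realType.
Local Notation C := (R[i]).
Local Notation rc := (real_complex R).

Lemma ReM_rc (r : R) (x : C) : complex.Re (rc r * x) = r * complex.Re x.
Proof. by case: x => a b /=; ring. Qed.

Lemma ge0_real_eq (z : C) : 0 <= z -> z = rc (complex.Re z).
Proof. by case: z => a b; rewrite lecE /= => /andP[/eqP -> _]. Qed.

Lemma bf1_eq0 n (u : 'cV[C]_n) : bf 1%:M u u = 0 -> u = 0.
Proof.
rewrite bf1 => hs; apply/matrixP => i j; rewrite (ord1 j) [RHS]mxE.
have := psumr_eq0P (P := xpredT) (F := fun i => (u i 0)^* * u i 0) _ hs (i := i) isT.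
move=> /(_ _) h; apply/eqP; rewrite -mul_conjC_eq0 mulrC h //.
by move=> k _; rewrite mulrC mul_conjC_ge0.
Qed.

Lemma psd_qf0 n (A : 'M[C]_n) w : psd A -> bf A w w = 0 -> A *m w = 0.
Proof.
move=> [hA pA] h0; set u := A *m w.
set N := bf 1%:M u u.
have N0 : 0 <= N := bf1_ge0 u.
have hN : bf A w u = N by rewrite /N /bf mulmx1 /u hadjM hA mulmxA.
have hN' : bf A u w = N by rewrite (bf_adj _ _ hA) hN {1}(ge0_real_eq N0) conj_rc -ge0_real_eq.
set q := bf A u u.
have q0 : 0 <= q := pA u.
have key : forall r : R, 0 <= - (2 * r) * complex.Re N + r ^+ 2 * complex.Re q.
  move=> r; have := pA (w + rc (- r) *: u); rewrite -/(bf _ _ _).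
  rewrite !(bfDl, bfDr, bfZl, bfZr) h0 hN hN' -/q conj_rc => /ge0_Re.
  rewrite !ReD !ReM_rc /=; nra.
have a0 := ge0_Re N0; have b0 := ge0_Re q0.
set a := complex.Re N in a0 key; set b := complex.Re q in b0 key.
set t := a / (b + 1).
have ht : t * (b + 1) = a by rewrite /t divfK // gt_eqF //; lra.
have t0 : 0 <= t by rewrite /t divr_ge0 //; lra.
have := key t => kt.
have : t ^+ 2 * (b + 2) <= 0 by nra.
move=> h2; have tt : t = 0 by nra.
have a00 : a = 0 by rewrite -ht tt mul0r.
apply: bf1_eq0; rewrite -/N (ge0_real_eq N0) -/a a00.
by rewrite rmorph0.
Qed.

End QF.

Section Dir2.
Variable R : realType.
Local Notation C := (R[i]).
Local Notation rc := (real_complex R).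

Lemma ImJ (x : C) : complex.Im (x^*) = - complex.Im x.
Proof. by case: x. Qed.

Lemma real_neg (z : C) : z^* = z -> ~ (0 <= z) -> complex.Re z < 0.
Proof.
move=> hz nz.
have hI : complex.Im z = 0 by have := congr1 (@complex.Im R) hz; rewrite ImJ; lra.
rewrite ltNge; apply/negP => ha; apply: nz; rewrite lecE hI /= eqxx.
exact: ha.
Qed.

Lemma sum_nc_eq0 n (v : 'cV[C]_n) : \sum_i nc (v i 0) = 0 -> v = 0.
Proof.
move=> hs; apply/matrixP => i j; rewrite (ord1 j) [RHS]mxE.
apply: nc_eq0; apply: (psumr_eq0P (P := xpredT) (F := fun i => nc (v i 0))) => //.
by move=> k _; exact: nc_ge0.
Qed.

Variables d e : nat.

Lemma dir2 (Psi : {linear 'M[C]_d.+1 -> 'M[C]_e.+1}) :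
  SP Psi -> interior_HP (@SN R d.+1 e.+1) Psi.
Proof.
move=> [hP [rho [drho urho dA uA]]].
split => //; split; first by split => //; exists rho.
apply: contrapT => hno.
have hk : forall k : nat, exists Phi : {linear 'M[C]_d.+1 -> 'M[C]_e.+1},
   exists v : 'cV[C]_e.+1,
   [/\ HP Phi, Defs.near_map (k.+1%:R^-1) Psi Phi & ~ (0 <= bf (Phi rho) v v)].
  move=> k; apply: contrapT => nk; apply: hno.
  exists (k.+1%:R^-1); split; first by rewrite invr_gt0 ltr0Sn.
  move=> Phi hPhi hn; split => //; exists rho; split => //.
  split; last by case: hPhi => _ ->; case: drho.
  split; first by case: hPhi => hh _; rewrite -hh; case: drho => -[-> _].
  move=> v; apply: contrapT => nv; apply: nk; exists Phi, v; split => //.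
have [Phi hf0] := choice hk.
have [v hf] := choice hf0.
have hherm k : adj (Phi k rho) = Phi k rho.
  by have [[hh _] _ _] := hf k; rewrite -hh; case: drho => -[-> _].
have hneg k : complex.Re (bf (Phi k rho) (v k) (v k)) < 0.
  have [_ _ nz] := hf k; apply: real_neg nz.
  by rewrite -bf_adj // hherm.
pose s k := \sum_i nc (v k i 0).
have s0 k : 0 < s k.
  rewrite lt_def; apply/andP; split; last by apply: sumr_ge0 => *; exact: nc_ge0.
  apply/eqP => /sum_nc_eq0 v0.
  have := hneg k; rewrite v0 /bf mulmx0 mxE /=; lra.
pose w k := rc ((s k)^-1) *: v k.
have wneg k : complex.Re (bf (Phi k rho) (w k) (w k)) <= 0.
  rewrite /w bfZl bfZr conj_rc !ReM_rc.
  have := hneg k; have := s0 k => h1 h2.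
  have i0 : 0 < (s k)^-1 by rewrite invr_gt0.
  set x := complex.Re _ in h2 *; nra.
have wnc k i : nc (w k i 0) = (s k)^-1 * nc (v k i 0).
  by rewrite /w mxE ncM nc_rc gtr0_norm // invr_gt0.
have wsum k : \sum_i nc (w k i 0) = 1.
  under eq_bigr do rewrite wnc; by rewrite -mulr_sumr mulVf // gt_eqF.
have wb k i j : nc (w k i j) <= 1.
  rewrite (ord1 j) -(wsum k) (bigD1 i) //= lerDl.
  by apply: sumr_ge0 => *; exact: nc_ge0.
have [g [hg [L mc]]] := mextract wb.
have hA : mconv (fun k => Phi (g k) rho) (Psi rho).
  move=> i j.
  have c1 := conv_near (Phi := Phi) (X := fun _ => rho) (ler0n _ 2)
    (fun k => let: And3 _ hn _ := hf k in hn) (fun k i j => dens_bound i j drho) hg i j.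
  have c2 := conv_add c1 (conv_cst (Psi rho i j)); rewrite add0r in c2.
  by apply: conv_ext c2 => k /=; rewrite subrK.
have cb := conv_bf hA mc.
have reL : complex.Re (bf (Psi rho) L L) <= 0.
  by apply: rconv_le (conv_Re cb) _ => k; exact: wneg.
have ge : 0 <= bf (Psi rho) L L by case: dA => -[_ pA] _; exact: pA.
have z0 : bf (Psi rho) L L = 0.
  rewrite (ge0_real_eq ge); have := ge0_Re ge => h.
  have -> : complex.Re (bf (Psi rho) L L) = 0 by apply/eqP; rewrite eq_le h reL.
  by rewrite rmorph0.
have AL := psd_qf0 dA.1 z0.
have L0 : L = 0 by rewrite -(mulKmx uA L) AL mulmx0.
have cs := conv_sum (index_enum _) xpredT (fun i => conv_nc (mc i 0)).
have c1 : conv (fun k => \sum_(i <- index_enum 'I_e.+1 | xpredT i) rc (nc (w (g k) i 0))) 1.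
  apply: conv_ext (conv_cst 1) => k.
  by rewrite -rmorph_sum /= wsum rmorph1.
have := conv_uniq c1 cs; rewrite L0.
have -> : \sum_(i <- index_enum 'I_e.+1 | xpredT i) rc (nc ((0 : 'cV[C]_e.+1) i 0)) = 0.
  by apply: big1 => i _; rewrite mxE nc0 rmorph0.
by move/eqP; rewrite oner_eq0.
Qed.

End Dir2.

Section Dir3.
Variable R : realType.
Local Notation C := (R[i]).
Local Notation rc := (real_complex R).
Variables d e : nat.

Lemma psd_lim n (M : nat -> 'M[C]_n) L : mconv M L -> (forall k, psd (M k)) -> psd L.
Proof.
move=> mc hM; split.
  apply/matrixP => i j; rewrite hadjE.
  have c1 := conv_conj (mc j i).
  have c2 : conv (fun k => M k i j) ((L j i)^*).
    apply: conv_ext c1 => k; have [hh _] := hM k.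
    by rewrite -[in RHS]hh hadjE.
  exact: conv_uniq c2 (mc i j).
move=> v; apply: (conv_ge0 (conv_bf mc (fun i j => conv_cst (v i j)))).
by move=> k; have [_ pp] := hM k; exact: pp.
Qed.

Lemma dir3 (Psi : {linear 'M[C]_d.+1 -> 'M[C]_e.+1}) :
  closure_HP (@SP R d.+1 e.+1) Psi -> SN Psi.
Proof.
move=> [hP hcl]; split => //.
have hk : forall k : nat, exists Phi : {linear 'M[C]_d.+1 -> 'M[C]_e.+1},
   exists rho : 'M[C]_d.+1,
   [/\ Defs.near_map (k.+1%:R^-1) Psi Phi, density rho & density (Phi rho)].
  move=> k; have := hcl (k.+1%:R^-1); rewrite invr_gt0 ltr0Sn => /(_ isT).
  move=> [Phi [[_ [rho [dr _ dPr _]]] [_ hn]]].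
  by exists Phi, rho.
have [Phi hf0] := choice hk.
have [rho hf] := choice hf0.
have rb k i j : nc (rho k i j) <= 2 by have [_ dr _] := hf k; exact: dens_bound.
have [g [hg [L mc]]] := mextract rb.
have dL : density L.
  split; first by apply: psd_lim mc _ => k; have [_ [dr _] _] := hf (g k).
  have ct := conv_sum (index_enum _) xpredT (fun i => mc i i).
  have c1 : conv (fun k => \sum_(i <- index_enum 'I_d.+1 | xpredT i) rho (g k) i i) 1.
    by apply: conv_ext (conv_cst 1) => k; have [_ [_ <-] _] := hf (g k).
  exact: esym (conv_uniq c1 ct).
exists L; split => //; split; last by case: hP => _ ->; case: dL.
have mPL : mconv (fun k => Phi (g k) (rho (g k))) (Psi L).
  move=> i j.
  have c1 := conv_near (Phi := Phi) (X := fun k => rho (g k)) (ler0n _ 2)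
    (fun k => let: And3 hn _ _ := hf k in hn) (fun k i j => rb (g k) i j) hg i j.
  have c2 := conv_add c1 (conv_lin Psi mc i j); rewrite add0r in c2.
  by apply: conv_ext c2 => k /=; rewrite subrK.
apply: psd_lim mPL _ => k; by have [_ _ [pp _]] := hf (g k).
Qed.

End Dir3.


Theorem theorem4 (R : realType) (n m : nat) :
  (forall Psi : {linear 'M[R[i]]_n -> 'M[R[i]]_m},
      interior_HP (@SN R n m) Psi <-> SP Psi) /\
  (forall Psi : {linear 'M[R[i]]_n -> 'M[R[i]]_m},
      closure_HP (@SP R n m) Psi <-> SN Psi).
Proof.
case: n => [|d].
  split => Psi; split.
  - by move=> [_ [[_ [rho [dr _]]] _]]; case: (no_density0 dr).
  - by move=> [_ [rho [dr _]]]; case: (no_density0 dr).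
  - by move=> [_ /(_ 1 ltr01) [Phi [[_ [rho [dr _]]] _]]]; case: (no_density0 dr).
  - by move=> [_ [rho [dr _]]]; case: (no_density0 dr).
case: m => [|e].
  split => Psi; split.
  - by move=> [_ [[_ [rho [_ dr]]] _]]; case: (no_density0 dr).
  - by move=> [_ [rho [_ _ dr _]]]; case: (no_density0 dr).
  - by move=> [_ /(_ 1 ltr01) [Phi [[_ [rho [_ _ dr _]]] _]]]; case: (no_density0 dr).
  - by move=> [_ [rho [_ dr]]]; case: (no_density0 dr).
split => Psi; split; [exact: dir1 | exact: dir2 | exact: dir3 | exact: dir4].
Qed.
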